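(* Suppose $\mathit{Act}$ is finite and $|\mathit{Act}|\ge2$. Then verdict equivalence $\simeq$ has no finite equational basis over open monitors: there is no finite set $\mathcal{E}$ of equations between monitors that is sound for $\simeq$ (i.e. $\mathcal{E}\vdash m=n$ implies $m\simeq n$) and complete for $\simeq$ (i.e. $m\simeq n$ implies $\mathcal{E}\vdash m=n$, for all monitors $m,n$ possibly containing variables).
   Context: Monitors: terms $m,n ::= v \mid a.m \mid m+n \mid x$ with $a\in\mathit{Act}$, $x$ ranging over a countably infinite set of variables, and verdicts $v::=\mathit{end}\mid\mathit{yes}\mid\mathit{no}$. Semantics: $\xrightarrow{\alpha}$ ($\alpha\in\mathit{Act}\cup\{\tau\}$, $\tau\notin\mathit{Act}$) is the least relation with $a.m\xrightarrow{a}m$; $m\xrightarrow{\alpha}m'$ implies $m+n\xrightarrow{\alpha}m'$ and $n+m\xrightarrow{\alpha}m'$; $v\xrightarrow{\alpha}v$ for verdicts $v$. Weak transitions: $m\xRightarrow{\varepsilon}m'$ iff $m(\xrightarrow{\tau})^*m'$; $m\xRightarrow{a}m'$ iff $m\xRightarrow{\varepsilon}\xrightarrow{a}\xRightarrow{\varepsilon}m'$; $m\xRightarrow{as'}m'$ ($s'\ne\varepsilon$) iff $m\xRightarrow{a}m_1\xRightarrow{s'}m'$. For closed (variable-free) $m$, $L_a(m)=\{s\in\mathit{Act}^*\mid m\xRightarrow{s}\mathit{yes}\}$, $L_r(m)=\{s\in\mathit{Act}^*\mid m\xRightarrow{s}\mathit{no}\}$; $m\simeq n$ iff $L_a(m)=L_a(n)$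 and $L_r(m)=L_r(n)$ for closed terms, and for open terms iff $\sigma(m)\simeq\sigma(n)$ for every substitution $\sigma$ mapping variables to closed monitors. $\mathcal{E}\vdash m=n$ denotes derivability from $\mathcal{E}$ by reflexivity, symmetry, transitivity, substitution (from $t=t'$ infer $\sigma(t)=\sigma(t')$) and congruence for $a.\_$ and $+$. *)

(* Defs.v *)
From Stdlib Require Import List.
From mathcomp Require Import all_boot.

Set Implicit Arguments.
Unset Strict Implicit.
Unset Printing Implicit Defensive.

Inductive verdict : Type := Vend | Vyes | Vno.

Inductive mon (A : Type) : Type :=
  | MVer : verdict -> mon A
  | MPre : A -> mon A -> mon A
  | MSum : mon A -> mon A -> mon A
  | MVar : nat -> mon A.

Arguments MVer {A} _.
Arguments MVar {A} _.

(* Labels: Act ∪ {τ}, with τ represented by None. *)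
Inductive step (A : Type) : mon A -> option A -> mon A -> Prop :=
  | st_pre : forall a m, step (MPre a m) (Some a) m
  | st_suml : forall m n al m', step m al m' -> step (MSum m n) al m'
  | st_sumr : forall m n al m', step m al m' -> step (MSum n m) al m'
  | st_ver : forall v al, step (MVer v) al (MVer v).

Inductive tau_star (A : Type) : mon A -> mon A -> Prop :=
  | ts_refl : forall m, tau_star m m
  | ts_step : forall m m1 m', step m None m1 -> tau_star m1 m' -> tau_star m m'.

Fixpoint wtrans (A : Type) (m : mon A) (s : seq A) (m' : mon A) : Prop :=
  match s with
  | [::] => tau_star m m'
  | a :: s' => exists m1 m2, tau_star m m1 /\ step m1 (Some a) m2 /\ wtrans m2 s' m'
  end.

Fixpoint closed (A : Type) (m : mon A) : Prop :=
  match m with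
  | MVer _ => True
  | MPre _ m => closed m
  | MSum m n => closed m /\ closed n
  | MVar _ => False
  end.

Definition acc (A : Type) (m : mon A) (s : seq A) : Prop := wtrans m s (MVer Vyes).
Definition rej (A : Type) (m : mon A) (s : seq A) : Prop := wtrans m s (MVer Vno).

Definition closed_equiv (A : Type) (m n : mon A) : Prop :=
  (forall s, acc m s <-> acc n s) /\ (forall s, rej m s <-> rej n s).

Fixpoint subst (A : Type) (sigma : nat -> mon A) (m : mon A) : mon A :=
  match m with
  | MVer v => MVer v
  | MPre a m => MPre a (subst sigma m)
  | MSum m n => MSum (subst sigma m) (subst sigma n)
  | MVar x => sigma x
  end.

Definition vequiv (A : Type) (m n : mon A) : Prop :=
  forall sigma : nat -> mon A, (forall x, closed (sigma x)) ->
    closed_equiv (subst sigma m) (subst sigma n).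

Inductive derivable (A : Type) (E : list (mon A * mon A)) : mon A -> mon A -> Prop :=
  | d_ax : forall m n, In (m, n) E -> derivable E m n
  | d_refl : forall m, derivable E m m
  | d_sym : forall m n, derivable E m n -> derivable E n m
  | d_trans : forall m n p, derivable E m n -> derivable E n p -> derivable E m p
  | d_subst : forall (sigma : nat -> mon A) m n,
      derivable E m n -> derivable E (subst sigma m) (subst sigma n)
  | d_pre : forall a m n, derivable E m n -> derivable E (MPre a m) (MPre a n)
  | d_sum : forall m m' n n', derivable E m m' -> derivable E n n' ->
      derivable E (MSum m n) (MSum m' n').

(* Main.v *)
Require Import Defs.
From Stdlib Require Import List.
From mathcomp Require Import all_boot.
From Stdlib Require Import ClassicalEpsilon.
From mathcomp Require Import zify.

Fixpoint verS {A : Type} (v0 : verdict) (u : seq A) (m : mon A) : Prop :=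
  match m with
  | MVer v => v = v0
  | MPre a m' => match u with c :: u' => c = a /\ verS v0 u' m' | [::] => False end
  | MSum m1 m2 => verS v0 u m1 \/ verS v0 u m2
  | MVar _ => False
  end.

Lemma step_tau_ver A (m m1 : mon A) al : step m al m1 -> al = None ->
  forall v0 u, verS v0 u m1 -> verS v0 u m.
Proof.
  induction 1; intros Hal v0 u Hv; simpl; auto; discriminate.
Qed.

Lemma tau_ver A (m m1 : mon A) : tau_star m m1 -> forall v0 u, verS v0 u m1 -> verS v0 u m.
Proof.
  induction 1; intros v0 u H'; auto.
  eapply step_tau_ver; eauto.
Qed.

Lemma step_vis A (m m2 : mon A) al : step m al m2 -> forall c, al = Some c ->
  forall v0 u, verS v0 u m2 -> verS v0 (c :: u) m.
Proof.
  induction 1; intros c Hal v0 u Hv; simpl; eauto.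
  injection Hal; intros ->; auto.
Qed.

Lemma wtrans_verS A (u : seq A) : forall m v0, wtrans m u (MVer v0) -> verS v0 u m.
Proof.
  induction u as [|c u IH]; simpl; intros m v0 H.
  - eapply tau_ver; eauto. simpl; reflexivity.
  - destruct H as [m1 [m2 [H1 [H2 H3]]]].
    eapply tau_ver; eauto. eapply step_vis; eauto.
Qed.

Lemma verdict_wtrans A (u : seq A) v : wtrans (MVer v) u (MVer v).
Proof.
  induction u as [|c u IH]; simpl.
  - apply ts_refl.
  - exists (MVer v), (MVer v); split; [apply ts_refl|split; [constructor|exact IH]].
Qed.

Lemma wtrans_suml A (u : seq A) m n v0 : wtrans m u (MVer v0) -> wtrans (MSum m n) u (MVer v0).
Proof.
  destruct u as [|c u]; simpl; intros H.
  - inversion H; subst.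
    + eapply ts_step; [apply st_suml; apply st_ver| apply ts_refl].
    + eapply ts_step; [apply st_suml; eassumption| eassumption].
  - destruct H as [m1 [m2 [H1 [H2 H3]]]].
    inversion H1; subst.
    + exists (MSum m1 n), m2; split; [apply ts_refl|split; [apply st_suml; assumption|assumption]].
    + exists m1, m2; split; [eapply ts_step; [apply st_suml; eassumption|eassumption]|auto].
Qed.

Lemma wtrans_sumr A (u : seq A) m n v0 : wtrans m u (MVer v0) -> wtrans (MSum n m) u (MVer v0).
Proof.
  destruct u as [|c u]; simpl; intros H.
  - inversion H; subst.
    + eapply ts_step; [apply st_sumr; apply st_ver| apply ts_refl].
    + eapply ts_step; [apply st_sumr; eassumption| eassumption].
  - destruct H as [m1 [m2 [H1 [H2 H3]]]].
    inversion H1; subst.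
    + exists (MSum n m1), m2; split; [apply ts_refl|split; [apply st_sumr; assumption|assumption]].
    + exists m1, m2; split; [eapply ts_step; [apply st_sumr; eassumption|eassumption]|auto].
Qed.

Lemma verS_wtrans A (m : mon A) : forall u v0, verS v0 u m -> wtrans m u (MVer v0).
Proof.
  induction m as [v|a m IH|m1 IH1 m2 IH2|x]; intros u v0 H; simpl in H.
  - subst; apply verdict_wtrans.
  - destruct u as [|c u]; [contradiction|]. destruct H as [-> H].
    simpl. exists (MPre a m), m. split; [apply ts_refl|split; [apply st_pre|auto]].
  - destruct H; [apply wtrans_suml | apply wtrans_sumr]; auto.
  - contradiction.
Qed.

Lemma subst_comp A (s t : nat -> mon A) m : subst t (subst s m) = subst (fun x => subst t (s x)) m.
Proof. induction m; simpl; congruence. Qed.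

Lemma subst_id A (m : mon A) : subst (@MVar A) m = m.
Proof. induction m; simpl; congruence. Qed.

Lemma subst_closed A (t : nat -> mon A) m : (forall x, Defs.closed (t x)) -> Defs.closed (subst t m).
Proof. intros H; induction m; simpl; auto. Qed.

Lemma vequiv_use A (l r : mon A) : vequiv l r -> forall t, (forall x, Defs.closed (t x)) ->
  forall v0 u, v0 = Vyes \/ v0 = Vno -> (verS v0 u (subst t l) <-> verS v0 u (subst t r)).
Proof.
  intros Hv t Ht v0 u Hv0. destruct (Hv t Ht) as [Ha Hr].
  destruct Hv0 as [->| ->]; split; intro H; apply wtrans_verS; [apply Ha|apply Ha|apply Hr|apply Hr];
    apply verS_wtrans; exact H.
Qed.

Fixpoint evG {Act : Type} (v0 : verdict) (gv : bool) (d : nat) (s : seq (option Act)) (m : mon Act) : Prop :=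
  match m with
  | MVer v => v = v0
  | MPre c m' => match s with Some c' :: s' => c' = c /\ evG v0 gv d.+1 s' m' | _ => False end
  | MSum m1 m2 => evG v0 gv d s m1 \/ evG v0 gv d s m2
  | MVar _ => gv = true /\ 0 < d /\ List.In None s
  end.

Fixpoint depth {A : Type} (m : mon A) : nat :=
  match m with
  | MPre _ m => (depth m).+1
  | MSum m n => maxn (depth m) (depth n)
  | _ => 0
  end.

Definition adm {Act : Type} (a : Act) (N d : nat) (s : seq (option Act)) :=
  forall i, nth (Some a) s i = None -> d + i = N.

Definition MR {Act : Type} (a : Act) N (l r : mon Act) :=
  forall (sg : nat -> mon Act) d s, adm a N d s ->
   (evG Vyes true d s (subst sg l) <-> evG Vyes true d s (subst sg r)) /\
   (evG Vno false d s (subst sg l) <-> evG Vno false d s (subst sg r)).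

Lemma adm_tail Act (a : Act) N d c s : adm a N d (Some c :: s) -> adm a N d.+1 s.
Proof. intros H i Hi. have := H i.+1 Hi. lia. Qed.

Lemma deriv_MR Act (a : Act) N E : (forall l r, In (l, r) E -> MR a N l r) ->
  forall m n, derivable E m n -> MR a N m n.
Proof.
  intros HE m n D. induction D as [m n Hin|m|m n D IH|m n p D1 IH1 D2 IH2|t m n D IH|c m n D IH|m m' n n' D1 IH1 D2 IH2].
  - auto.
  - intros sg d s _; tauto.
  - intros sg d s Ha; destruct (IH sg d s Ha); tauto.
  - intros sg d s Ha; destruct (IH1 sg d s Ha); destruct (IH2 sg d s Ha); tauto.
  - intros sg d s Ha; rewrite !subst_comp; apply IH; auto.
  - intros sg d s Ha; simpl. destruct s as [|[c'|] s']; try tauto.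
    destruct (IH sg d.+1 s' (adm_tail _ _ _ _ _ _ Ha)) as [H1 H2]. rewrite H1 H2. tauto.
  - intros sg d s Ha; simpl. destruct (IH1 sg d s Ha) as [H1 H2].
    destruct (IH2 sg d s Ha) as [H3 H4]. rewrite H1 H2 H3 H4. tauto.
Qed.

Lemma decomp Act (s : seq (option Act)) : exists s0 rest, s = map Some s0 ++ rest /\
  (rest = [::] \/ exists r', rest = None :: r').
Proof.
  induction s as [|[c|] s IH].
  - exists [::], [::]; auto.
  - destruct IH as [s0 [rest [-> H]]]. exists (c :: s0), rest; auto.
  - exists [::], (None :: s); eauto.
Qed.

Lemma caseA Act (M : mon Act) : forall d s0 rest gv v0, v0 <> Vend ->
  (rest = [::] \/ exists r', rest = None :: r') -> (gv = false \/ rest = [::]) ->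
  (evG v0 gv d (map Some s0 ++ rest) M <-> verS v0 s0 (subst (fun _ => MVer Vend) M)).
Proof.
  induction M as [v|c M IH|M1 IH1 M2 IH2|x]; intros d s0 rest gv v0 Hv Hr Hg; simpl.
  - tauto.
  - destruct s0 as [|c0 s0]; simpl.
    + destruct Hr as [->|[r' ->]]; simpl; tauto.
    + rewrite (IH d.+1 s0 rest gv v0) //.
  - rewrite (IH1 d s0 rest gv v0) // (IH2 d s0 rest gv v0) //.
  - split; [|intros H; congruence].
    intros [Hgv [_ Hin]]. destruct Hg as [Hg|Hg]; subst; [discriminate|].
    rewrite cats0 in Hin. apply in_map_iff in Hin. destruct Hin as [y [Hy _]]; discriminate.
Qed.

Lemma caseB Act (M : mon Act) : forall d s0 rest, 0 < d ->
  (evG Vyes true d (map Some s0 ++ None :: rest) M <-> verS Vyes s0 (subst (fun _ => MVer Vyes) M)).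
Proof.
  induction M as [v|c M IH|M1 IH1 M2 IH2|x]; intros d s0 rest Hd; simpl.
  - tauto.
  - destruct s0 as [|c0 s0]; simpl.
    + tauto.
    + rewrite (IH d.+1 s0 rest) //.
  - rewrite (IH1 d s0 rest) // (IH2 d s0 rest) //.
  - split; [tauto|]. intros _; split; [reflexivity|split; [exact Hd|]].
    apply in_or_app; right; left; reflexivity.
Qed.

Definition wm {A : Type} (w : seq A) : mon A := foldr (fun c m => MPre c m) (MVer Vyes) w.

Lemma verS_wm A (w : seq A) : forall u, verS Vyes u (wm w) <-> exists t, u = w ++ t.
Proof.
  induction w as [|c w IH]; intros u; simpl.
  - split; [intros _; exists u; reflexivity| auto].
  - destruct u as [|c' u]; simpl.
    + split; [tauto| intros [t Ht]; discriminate].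
    + rewrite IH. split.
      * intros [-> [t ->]]. exists t; reflexivity.
      * intros [t Ht]. injection Ht; intros; subst; eauto.
Qed.

Lemma closed_wm A (w : seq A) : Defs.closed (wm w).
Proof. induction w; simpl; auto. Qed.

Fixpoint tauL {A : Type} (P : nat -> bool) (f : nat -> mon A) (q : nat) : mon A :=
  match q with
  | 0 => MVer Vend
  | q'.+1 => if P q' then MSum (f q') (tauL P f q') else tauL P f q'
  end.

Lemma verS_tauL A P (f : nat -> mon A) v0 u (Hv : v0 <> Vend) q :
  verS v0 u (tauL P f q) <-> exists i, i < q /\ P i /\ verS v0 u (f i).
Proof.
  induction q as [|q IH]; simpl.
  - split; [intros H; congruence| intros [i [Hi _]]; lia].
  - destruct (P q) eqn:HP; simpl; rewrite IH; split.
    + intros [H|[i [Hi [Hp H]]]]; [exists q; auto|exists i; split; [lia|auto]].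
    + intros [i [Hi [Hp H]]]. destruct (i == q) eqn:E; [left; move/eqP: E => E; subst; auto|].
      right; exists i; split; [|auto]. move/negbT: E. lia.
    + intros [i [Hi [Hp H]]]; exists i; split; [lia|auto].
    + intros [i [Hi [Hp H]]]. destruct (i == q) eqn:E; [move/eqP: E => E; subst; congruence|].
      exists i; split; [|auto]. move/negbT: E. lia.
Qed.

Lemma closed_tauL A P (f : nat -> mon A) q : (forall i, Defs.closed (f i)) -> Defs.closed (tauL P f q).
Proof. intros H; induction q; simpl; auto. destruct (P q); simpl; auto. Qed.

Definition pb (P : Prop) : bool := if excluded_middle_informative P then true else false.
Lemma pbP (P : Prop) : pb P = true <-> P.
Proof. unfold pb; destruct (excluded_middle_informative P); split; auto; discriminate. Qed.

Lemma pre_unique (Act : Type) (a b : Act) N (s0 : seq Act) i k t : a <> b -> size s0 = N ->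
  i <= N -> k <= N -> drop k s0 ++ (a :: nseq N b) = (drop i s0 ++ (a :: nseq N b)) ++ t -> i = k.
Proof.
  intros Hab Hs Hi Hk H.
  have Hsz := congr1 size H. rewrite !size_cat !size_drop /= size_nseq in Hsz.
  destruct (ltnP k i) as [Hki|Hik]; [|lia].
  have Hn := congr1 (fun x => nth a x (N - k)) H. simpl in Hn.
  rewrite nth_cat size_drop Hs ltnn subnn /= in Hn.
  rewrite nth_cat size_cat size_drop Hs /= size_nseq in Hn.
  have E1 : (N - k < N - i + N.+1) = true by apply/idP; lia.
  rewrite E1 in Hn.
  rewrite nth_cat size_drop Hs in Hn.
  have E2 : (N - k < N - i) = false by apply/negbTE; lia.
  have E3 : N - k - (N - i) = (i - k - 1).+1 by lia.
  rewrite E2 E3 in Hn.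
  simpl in Hn. rewrite nth_nseq in Hn.
  have E4 : (i - k - 1 < N) = true by apply/idP; lia.
  rewrite E4 in Hn.
  congruence.
Qed.

Definition tauC {Act : Type} (a b : Act) N (s0 : seq Act) (s : seq (option Act)) (sg : nat -> mon Act) :=
  fun x => tauL (fun q => pb (evG Vyes true q (drop q s) (sg x)))
                (fun q => wm (drop q s0 ++ (a :: nseq N b))) N.

Lemma caseC (Act : Type) (a b : Act) N (s0 : seq Act) rest (sg : nat -> mon Act) :
  a <> b -> size s0 = N ->
  forall l k, k + depth l < N ->
  (evG Vyes true k (drop k (map Some s0 ++ None :: rest)) (subst sg l) <->
   verS Vyes (drop k s0 ++ (a :: nseq N b)) (subst (tauC a b N s0 (map Some s0 ++ None :: rest) sg) l)).
Proof.
  intros Hab Hs l. induction l as [v|c M IH|M1 IH1 M2 IH2|x]; intros k Hk; simpl in Hk |- *.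
  - tauto.
  - have Hk' : k < size s0 by lia.
    rewrite (drop_nth (Some a)); last by rewrite size_cat size_map /=; lia.
    rewrite (drop_nth a Hk').
    rewrite nth_cat size_map Hk' (nth_map a) //. simpl.
    rewrite (IH k.+1) //. lia.
  - rewrite (IH1 k) ?(IH2 k) //; lia.
  - unfold tauC. rewrite verS_tauL //.
    split.
    + intros H. exists k; split; [lia|split].
      * apply pbP; exact H.
      * apply verS_wm. exists [::]; rewrite cats0; reflexivity.
    + intros [i [Hi [Hp Hw]]]. apply verS_wm in Hw. destruct Hw as [t Ht].
      have Eik : i = k by apply (pre_unique _ a b N s0 i k t Hab Hs); [lia|lia|exact Ht].
      subst i. apply pbP; exact Hp.
Qed.

Lemma sound_small (Act : Type) (a b : Act) N (Hab : a <> b) l r :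
  vequiv l r -> depth l < N -> depth r < N -> MR a N l r.
Proof.
  intros Hv Hl Hr sg d s Hadm.
  destruct (decomp _ s) as [s0 [rest [Es Hrest]]]. subst s.
  have Ht1 : forall x, Defs.closed (subst (fun _ => MVer Vend) (sg x)).
  { intros x; apply subst_closed; simpl; auto. }
  split.
  - destruct Hrest as [Er|[r' Er]]; subst rest.
    + rewrite !(caseA _ _ _ _ _ _ Vyes); try discriminate; try (left; reflexivity); try (right; reflexivity).
      rewrite !subst_comp. apply vequiv_use; auto.
    + have HdN : d + size s0 = N.
      { apply Hadm. rewrite nth_cat size_map ltnn subnn; reflexivity. }
      destruct d as [|d].
      * have Hs0 : size s0 = N by lia.
        have H1 := caseC _ a b N s0 r' sg Hab Hs0 l 0 ltac:(lia).
        have H2 := caseC _ a b N s0 r' sg Hab Hs0 r 0 ltac:(lia).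
        rewrite !drop0 in H1 H2. rewrite H1 H2. apply vequiv_use; auto.
        intros x; apply closed_tauL; intros; apply closed_wm.
      * rewrite !caseB //. rewrite !subst_comp. apply vequiv_use; auto.
        intros x; apply subst_closed; simpl; auto.
  - rewrite !(caseA _ _ _ _ _ _ Vno); try discriminate; try (left; reflexivity); try exact Hrest.
    rewrite !subst_comp. apply vequiv_use; auto.
Qed.

Definition apre {A : Type} (a : A) n (m : mon A) : mon A := iter n (MPre a) m.
Definition allcL {A : Type} (l : seq A) (m : mon A) : mon A :=
  foldr (fun c acc => MSum (MPre c m) acc) (MVer Vend) l.
Definition Kt {Act : finType} (a : Act) N : mon Act :=
  apre a N (allcL (enum Act) (MSum (MVer Vyes) (MVer Vno))).
Definition eL {Act : finType} (a : Act) N : mon Act :=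
  MSum (MSum (MVar 0) (apre a N (MVar 0))) (Kt a N).
Definition eR {Act : finType} (a : Act) N : mon Act := MSum (MVar 0) (Kt a N).

Lemma subst_apre A (a : A) n m sg : subst sg (apre a n m) = apre a n (subst sg m).
Proof. induction n; simpl; congruence. Qed.

Lemma closed_subst_eq A (m : mon A) sg : Defs.closed m -> subst sg m = m.
Proof. induction m; simpl; intuition congruence. Qed.

Lemma closed_Kt (Act : finType) (a : Act) N : Defs.closed (Kt a N).
Proof.
  have H : Defs.closed (allcL (enum Act) (MSum (MVer Vyes) (MVer Vno))).
  { unfold allcL. induction (enum Act); simpl; auto. }
  unfold Kt, apre. induction N; simpl; auto.
Qed.

Lemma verS_apre A (a : A) v0 n m : forall u,
  verS v0 u (apre a n m) <-> exists u', u = nseq n a ++ u' /\ verS v0 u' m.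
Proof.
  induction n as [|n IH]; intros u; simpl.
  - split; [intros H; exists u; auto| intros [u' [-> H]]; auto].
  - destruct u as [|c u]; simpl.
    + split; [tauto| intros [u' [H _]]; discriminate].
    + fold (apre a n m). rewrite IH. split.
      * intros [-> [u' [-> H]]]. exists u'; auto.
      * intros [u' [Hu H]]. injection Hu; intros; subst; eauto.
Qed.

Lemma verS_allc A v0 (Hv : v0 <> Vend) (l : seq A) m c u :
  verS v0 (c :: u) (allcL l m) <-> List.In c l /\ verS v0 u m.
Proof.
  induction l as [|c' l IH]; simpl.
  - split; [intros H; congruence| tauto].
  - rewrite IH. split.
    + intros [[-> H]|[H1 H2]]; auto.
    + intros [[->|H1] H2]; auto.
Qed.

Lemma verS_up A v0 (m : mon A) : forall u t, verS v0 u m -> verS v0 (u ++ t) m.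
Proof.
  induction m as [v|c m IH|m1 IH1 m2 IH2|x]; intros u t H; simpl in *; auto.
  - destruct u as [|c' u]; [contradiction|]. destruct H as [-> H]. simpl; auto.
  - destruct H; [left|right]; auto.
Qed.

Lemma in_enum (Act : finType) (c : Act) : List.In c (enum Act).
Proof.
  have : c \in enum Act by rewrite mem_enum.
  elim: (enum Act) => [|x l IH] //=. rewrite in_cons => /orP [/eqP ->|H]; auto.
Qed.

Lemma eN_sound (Act : finType) (a : Act) N : vequiv (eL a N) (eR a N).
Proof.
  intros sg Hc.
  have key : forall v0 u, v0 = Vyes \/ v0 = Vno ->
     (verS v0 u (subst sg (eL a N)) <-> verS v0 u (subst sg (eR a N))).
  { intros v0 u Hv0. have Hne : v0 <> Vend by destruct Hv0; subst; discriminate.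
    unfold eL, eR; simpl. rewrite subst_apre (closed_subst_eq _ _ sg (closed_Kt _ a N)). simpl.
    split; [|tauto].
    intros [[H|H]|H]; auto.
    apply verS_apre in H. destruct H as [u' [-> H]].
    destruct u' as [|c u''].
    - left. have := verS_up _ _ _ _ (nseq N a ++ [::]) H. simpl; auto.
    - right. unfold Kt. apply verS_apre. exists (c :: u''); split; [reflexivity|].
      apply verS_allc; auto. split; [apply in_enum|]. simpl; destruct Hv0; auto. }
  split; intros u; unfold acc, rej; split; intro H; apply verS_wtrans; apply wtrans_verS in H;
    first [apply key; auto | apply (key _ u); auto].
Qed.

Lemma adm_ex (Act : Type) (a : Act) (w : seq Act) : forall i,
  nth (Some a) (map Some w ++ [:: None]) i = None -> i = size w.
Proof.
  induction w as [|c w IH]; intros [|i]; simpl; auto; try discriminate.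
  all: try (destruct i; simpl; discriminate).
  all: intros H; rewrite (IH i H); reflexivity.
Qed.

Lemma evG_apre (Act : Type) (a : Act) v0 gv n m : forall d t,
  evG v0 gv d (map Some (nseq n a) ++ t) (apre a n m) <-> evG v0 gv (d + n) t m.
Proof.
  induction n as [|n IH]; intros d t; simpl.
  - rewrite addn0; tauto.
  - fold (apre a n m). rewrite IH. rewrite addSnnS. tauto.
Qed.

Lemma evG_allc (Act : Type) gv d t (l : seq Act) m :
  evG Vyes gv d (None :: t) (allcL l m) -> False.
Proof. induction l; simpl; intuition discriminate. Qed.

Lemma not_MR (Act : finType) (a : Act) N : 0 < N -> MR a N (eL a N) (eR a N) -> False.
Proof.
  intros HN H.
  have Ha : adm a N 0 (map Some (nseq N a) ++ [:: None]).
  { intros i Hi. have := adm_ex _ a (nseq N a) i Hi. rewrite size_nseq. lia. }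
  destruct (H (@MVar Act) 0 _ Ha) as [H1 _].
  rewrite !subst_id in H1. unfold eL, eR in H1. simpl in H1.
  have L : evG Vyes true 0 (map Some (nseq N a) ++ [:: None]) (apre a N (MVar 0)).
  { apply evG_apre. simpl. split; [reflexivity|split; [exact HN|left; reflexivity]]. }
  have R := proj1 H1 (or_introl (or_intror L)).
  destruct R as [[_ [Hd _]]|R]; [discriminate|].
  unfold Kt in R. apply evG_apre in R. apply evG_allc in R. exact R.
Qed.

Fixpoint maxd {A : Type} (E : seq (mon A * mon A)) : nat :=
  match E with
  | [::] => 0
  | p :: E' => maxn (maxn (depth p.1) (depth p.2)) (maxd E')
  end.

Lemma maxd_in A (E : seq (mon A * mon A)) l r : In (l, r) E -> depth l <= maxd E /\ depth r <= maxd E.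
Proof.
  induction E as [|[l' r'] E IH]; simpl; [tauto|].
  intros [Heq|Hin].
  - injection Heq; intros; subst. lia.
  - destruct (IH Hin). lia.
Qed.

Theorem mainTheorem20 (Act : finType) (hAct : 2 <= #|Act|) :
  ~ exists E : list (mon Act * mon Act),
      (forall m n : mon Act, derivable E m n -> vequiv m n) /\
      (forall m n : mon Act, vequiv m n -> derivable E m n).
Proof.
  intros [E [Hs Hc]].
  have [a [b [_ _ Hab]]] := card_gt1P hAct.
  have Hab' : a <> b by apply/eqP.
  pose N := (maxd E).+1.
  have Hd := Hc _ _ (eN_sound _ a N).
  apply (not_MR _ a N); [unfold N; lia|].
  apply (deriv_MR _ a N E); [|exact Hd].
  intros l r Hin. destruct (maxd_in _ E l r Hin) as [Hl Hr].
  apply (sound_small _ a b N Hab'); [apply Hs; apply d_ax; exact Hin| unfold N; lia| unfold N; lia].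
Qed.
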